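(* Let $\mu,\mu'$ be Borel probability measures on a separable metric space $X$, $\nu,\nu'$ Borel probability measures on a separable metric space $Y$, and $F\in\mathcal F^2$. Then for every $\lambda>0$, $$\pi^{(\lambda)}(\mu\otimes\nu,\mu'\otimes\nu')\le\max\Big\{\pi^{(\lambda)}(\mu,\mu')+\pi^{(\lambda)}(\nu,\nu'),\ 2F\big(\pi^{(\lambda)}(\mu,\mu'),\pi^{(\lambda)}(\nu,\nu')\big)\Big\},$$ where the left-hand side is computed on $X\times Y$ with the metric $d_F$.
   Context: $\mathcal F^2$: continuous $F\colon[0,+\infty)^2\to[0,+\infty)$ such that for all metric spaces $d_F((x,y),(x',y')):=F(d_X(x,x'),d_Y(y,y'))$ is a metric on $X\times Y$. For $A$ in a metric space and $r>0$, $U_r(A)=\{x:d(x,A)<r\}$. The $\lambda$-Prokhorov distance $\pi^{(\lambda)}(\mu,\nu)$ between Borel probability measures is the infimum of $\varepsilon>0$ such that $\mu(U_\varepsilon(A))\ge\nu(A)-\lambda\varepsilon$ for every Borel set $A$. *)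

(* Defs.v *)
From Stdlib Require Import Reals ClassicalEpsilon.
Open Scope R_scope.

Definition is_metric {T : Type} (d : T -> T -> R) : Prop :=
  (forall x y, d x y = 0 <-> x = y) /\
  (forall x y, d x y = d y x) /\
  (forall x y z, d x z <= d x y + d y z).

Definition countable_set {T : Type} (D : T -> Prop) : Prop :=
  exists g : T -> nat, forall x y, D x -> D y -> g x = g y -> x = y.

Definition separable {T : Type} (d : T -> T -> R) : Prop :=
  exists D : T -> Prop, countable_set D /\
    (forall x eps, 0 < eps -> exists z, D z /\ d x z < eps).

Definition is_open {T : Type} (d : T -> T -> R) (O : T -> Prop) : Prop :=
  forall x, O x -> exists r, 0 < r /\ forall y, d x y < r -> O y.

Definition sigma_algebra {T : Type} (S : (T -> Prop) -> Prop) : Prop :=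
  S (fun _ => True) /\
  (forall A, S A -> S (fun x => ~ A x)) /\
  (forall A : nat -> T -> Prop, (forall n, S (A n)) -> S (fun x => exists n, A n x)).

Definition borel {T : Type} (d : T -> T -> R) (A : T -> Prop) : Prop :=
  forall S : (T -> Prop) -> Prop,
    sigma_algebra S -> (forall O, is_open d O -> S O) -> S A.

(** Borel probability measures (set functions, meaningful on Borel sets) *)
Definition borel_prob {T : Type} (d : T -> T -> R) (mu : (T -> Prop) -> R) : Prop :=
  mu (fun _ => True) = 1 /\
  (forall A, borel d A -> 0 <= mu A) /\
  (forall A : nat -> T -> Prop,
     (forall n, borel d (A n)) ->
     (forall m n x, m <> n -> A m x -> A n x -> False) ->
     Un_cv (fun N => sum_f_R0 (fun n => mu (A n)) N)
           (mu (fun x => exists n, A n x))).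

Definition nbhd {T : Type} (d : T -> T -> R) (r : R) (A : T -> Prop) : T -> Prop :=
  fun x => exists a, A a /\ d x a < r.

Definition prok_adm {T : Type} (d : T -> T -> R) (lam : R)
  (mu nu : (T -> Prop) -> R) (eps : R) : Prop :=
  0 < eps /\ forall A, borel d A -> mu (nbhd d eps A) >= nu A - lam * eps.

Definition is_inf (S : R -> Prop) (m : R) : Prop :=
  (forall x, S x -> m <= x) /\ (forall b, (forall x, S x -> b <= x) -> b <= m).

Definition prokhorov {T : Type} (d : T -> T -> R) (lam : R)
  (mu nu : (T -> Prop) -> R) : R :=
  epsilon (inhabits 0)
    (fun r => is_inf (prok_adm d lam mu nu) r).

Definition F2 (F : R -> R -> R) : Prop :=
  (forall a b, 0 <= a -> 0 <= b -> 0 <= F a b) /\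
  (forall a b, 0 <= a -> 0 <= b -> forall eps, 0 < eps ->
     exists delta, 0 < delta /\
       forall a' b', 0 <= a' -> 0 <= b' -> Rabs (a' - a) < delta ->
         Rabs (b' - b) < delta -> Rabs (F a' b' - F a b) < eps) /\
  (forall (T U : Type) (dT : T -> T -> R) (dU : U -> U -> R),
     is_metric dT -> is_metric dU ->
     is_metric (fun p q : T * U => F (dT (fst p) (fst q)) (dU (snd p) (snd q)))).

Definition dprod {T U : Type} (F : R -> R -> R) (dT : T -> T -> R) (dU : U -> U -> R)
  : T * U -> T * U -> R :=
  fun p q => F (dT (fst p) (fst q)) (dU (snd p) (snd q)).

Definition is_product_measure {T U : Type} (dT : T -> T -> R) (dU : U -> U -> R)
  (dTU : T * U -> T * U -> R)
  (mu : (T -> Prop) -> R) (nu : (U -> Prop) -> R) (P : (T * U -> Prop) -> R) : Prop :=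
  borel_prob dTU P /\
  forall A B, borel dT A -> borel dU B ->
    P (fun p => A (fst p) /\ B (snd p)) = mu A * nu B.

(* Main.v *)
Require Import Defs.
From Stdlib Require Import Reals Lra ClassicalEpsilon FunctionalExtensionality PropExtensionality Classical List Lia.
Open Scope R_scope.

Lemma set_ext {T : Type} (A B : T -> Prop) : (forall x, A x <-> B x) -> A = B.
Proof. intros H; apply functional_extensionality; intro x; apply propositional_extensionality; auto. Qed.

Lemma borel_open {T : Type} (d : T -> T -> R) O : is_open d O -> borel d O.
Proof. intros H S _ HS; auto. Qed.

Lemma borel_compl {T : Type} (d : T -> T -> R) A : borel d A -> borel d (fun x => ~ A x).
Proof. intros H S HS Ho. apply (proj1 (proj2 HS)). apply H; assumption. Qed.

Lemma borel_union {T : Type} (d : T -> T -> R) (A : nat -> T -> Prop) :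
  (forall n, borel d (A n)) -> borel d (fun x => exists n, A n x).
Proof. intros H S HS Ho. apply (proj2 (proj2 HS)). intro n; apply H; assumption. Qed.

Lemma borel_True {T : Type} (d : T -> T -> R) : borel d (fun _ => True).
Proof. intros S HS Ho. apply (proj1 HS). Qed.

Lemma borel_False {T : Type} (d : T -> T -> R) : borel d (fun _ => False).
Proof.
  replace (fun _ : T => False) with (fun x : T => ~ (fun _ => True) x).
  - apply borel_compl, borel_True.
  - apply set_ext; intros; tauto.
Qed.

Lemma borel_or {T : Type} (d : T -> T -> R) A B : borel d A -> borel d B -> borel d (fun x => A x \/ B x).
Proof.
  intros HA HB.
  replace (fun x => A x \/ B x) with (fun x => exists n:nat, (match n with 0 => A | _ => B end) x).
  - apply borel_union; intros [|n]; auto.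
  - apply set_ext; intro x; split.
    + intros [[|n] H]; auto.
    + intros [H|H]; [exists 0%nat|exists 1%nat]; auto.
Qed.

Lemma borel_and {T : Type} (d : T -> T -> R) A B : borel d A -> borel d B -> borel d (fun x => A x /\ B x).
Proof.
  intros HA HB.
  replace (fun x => A x /\ B x) with (fun x => ~ ((fun y => ~ A y) x \/ (fun y => ~ B y) x)).
  - apply borel_compl, borel_or; apply borel_compl; auto.
  - apply set_ext; intro x; split; [intros H; split; apply NNPP; tauto | tauto].
Qed.

Lemma borel_andnot {T : Type} (d : T -> T -> R) A B : borel d A -> borel d B -> borel d (fun x => A x /\ ~ B x).
Proof. intros; apply borel_and; auto; apply borel_compl; auto. Qed.

Lemma d_refl {T : Type} (d : T -> T -> R) : is_metric d -> forall x, d x x = 0.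
Proof. intros [H _] x; apply H; reflexivity. Qed.

Lemma d_nonneg {T : Type} (d : T -> T -> R) : is_metric d -> forall x y, 0 <= d x y.
Proof.
  intros Hd x y. pose proof (d_refl d Hd x). destruct Hd as [_ [Hs Ht]].
  specialize (Ht x y x). rewrite (Hs y x) in Ht. lra.
Qed.

Lemma nbhd_open {T : Type} (d : T -> T -> R) r A : is_metric d -> is_open d (nbhd d r A).
Proof.
  intros Hd x [a [Ha Hxa]]. exists (r - d x a). split; [lra|].
  intros y Hy. exists a; split; auto. destruct Hd as [_ [Hs Ht]].
  specialize (Ht y x a). rewrite (Hs y x) in Ht. lra.
Qed.

Lemma nbhd_borel {T : Type} (d : T -> T -> R) r A : is_metric d -> borel d (nbhd d r A).
Proof. intros; apply borel_open, nbhd_open; auto. Qed.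

Lemma sum_const c N : sum_f_R0 (fun _ => c) N = (INR N + 1) * c.
Proof. induction N; simpl; [ring|]. rewrite IHN. destruct N; simpl; ring. Qed.

Lemma m_empty {T : Type} (d : T -> T -> R) m : borel_prob d m -> m (fun _ => False) = 0.
Proof.
  intros [H1 [H2 H3]].
  specialize (H3 (fun _ _ => False)).
  assert (Hc : Un_cv (fun N => sum_f_R0 (fun n => m (fun _ : T => False)) N) (m (fun x => exists n:nat, False))).
  { apply H3; [intros; apply borel_False | intros; auto]. }
  replace (fun x : T => exists n:nat, False) with (fun _ : T => False) in Hc
    by (apply set_ext; intro; split; [tauto| intros [_ H]; auto]).
  set (c := m (fun _ => False)) in *.
  destruct (Req_dec c 0) as [|Hne]; auto. exfalso.
  assert (Hp : Rabs c / 2 > 0) by (apply Rabs_pos_lt in Hne; lra).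
  destruct (Hc _ Hp) as [N HN].
  pose proof (HN N (le_n _)) as A1. pose proof (HN (S N) (le_S _ _ (le_n _))) as A2.
  rewrite sum_const in A1, A2. unfold R_dist in A1, A2. rewrite S_INR in A2.
  replace ((INR N + 1) * c - c) with (INR N * c) in A1 by ring.
  replace ((INR N + 1 + 1) * c - c) with ((INR N + 1) * c) in A2 by ring.
  assert (Rabs c <= Rabs ((INR N + 1) * c) + Rabs (INR N * c)).
  { replace c with ((INR N + 1) * c + - (INR N * c)) at 1 by ring.
    rewrite <- (Rabs_Ropp (INR N * c)). apply Rabs_triang. }
  lra.
Qed.

Lemma m_add2 {T : Type} (d : T -> T -> R) m A B : borel_prob d m -> borel d A -> borel d B ->
  (forall x, A x -> B x -> False) -> m (fun x => A x \/ B x) = m A + m B.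
Proof.
  intros Hm HA HB HAB. pose proof (m_empty d m Hm) as He. destruct Hm as [H1 [H2 H3]].
  set (S := fun n : nat => match n with 0 => A | 1 => B | _ => fun _ : T => False end).
  assert (Hc : Un_cv (fun N => sum_f_R0 (fun n => m (S n)) N) (m (fun x => exists n, S n x))).
  { apply H3.
    - intros [|[|n]]; simpl; auto. apply borel_False.
    - intros [|[|i]] [|[|j]] x Hij; simpl; intros; try tauto; eauto. }
  replace (fun x => exists n, S n x) with (fun x => A x \/ B x) in Hc.
  2:{ apply set_ext; intro x; split.
      - intros [H|H]; [exists 0%nat | exists 1%nat]; auto.
      - intros [[|[|n]] H]; simpl in H; tauto. }
  apply (UL_sequence _ _ _ Hc).
  intros eps Heps. exists 1%nat. intros n Hn. destruct n; [lia|].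
  replace (sum_f_R0 (fun n0 => m (S n0)) (Datatypes.S n)) with (m A + m B).
  { unfold R_dist; rewrite Rminus_diag, Rabs_R0; lra. }
  clear Hn. induction n; simpl; [reflexivity|]. simpl in IHn. rewrite <- IHn, He; ring.
Qed.

Lemma m_nonneg {T : Type} (d : T -> T -> R) m A : borel_prob d m -> borel d A -> 0 <= m A.
Proof. intros [_ [H _]] HA; auto. Qed.

Lemma m_split {T : Type} (d : T -> T -> R) m C V : borel_prob d m -> borel d C -> borel d V ->
  m C = m (fun x => C x /\ V x) + m (fun x => C x /\ ~ V x).
Proof.
  intros Hm HC HV. rewrite <- m_add2 with (d := d); auto.
  - f_equal. apply set_ext; intro x. destruct (classic (V x)); tauto.
  - apply borel_and; auto.
  - apply borel_andnot; auto.
  - intros x; tauto.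
Qed.

Lemma m_mono {T : Type} (d : T -> T -> R) m A B : borel_prob d m -> borel d A -> borel d B ->
  (forall x, A x -> B x) -> m A <= m B.
Proof.
  intros Hm HA HB HAB. rewrite (m_split d m B A Hm HB HA).
  replace (fun x => B x /\ A x) with A by (apply set_ext; intro x; split; auto; tauto).
  pose proof (m_nonneg d m (fun x => B x /\ ~ A x) Hm (borel_andnot d B A HB HA)). lra.
Qed.

Lemma m_le1 {T : Type} (d : T -> T -> R) m A : borel_prob d m -> borel d A -> m A <= 1.
Proof. intros Hm HA. rewrite <- (proj1 Hm). apply m_mono with d; auto. apply borel_True. Qed.

Lemma m_cont_below {T : Type} (d : T -> T -> R) m (S : nat -> T -> Prop) c :
  borel_prob d m -> (forall n, borel d (S n)) -> (forall n x, S n x -> S (Datatypes.S n) x) ->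
  (forall n, m (S n) <= c) -> m (fun x => exists n, S n x) <= c.
Proof.
  intros Hm HS Hinc Hc.
  assert (Hle : forall i j x, (i <= j)%nat -> S i x -> S j x).
  { intros i j x Hij; induction Hij; auto. }
  set (D := fun n => match n with 0 => S 0%nat | Datatypes.S k => fun x => S (Datatypes.S k) x /\ ~ S k x end).
  assert (HD : forall n, borel d (D n)).
  { intros [|k]; simpl; auto. apply borel_andnot; auto. }
  assert (Hsum : forall N, sum_f_R0 (fun n => m (D n)) N = m (S N)).
  { induction N; simpl; auto. rewrite IHN.
    rewrite (m_split d m (S (Datatypes.S N)) (S N) Hm (HS _) (HS _)).
    replace (fun x => S (Datatypes.S N) x /\ S N x) with (S N)
      by (apply set_ext; intro x; split; [intros H; split; auto| tauto]).
    reflexivity. }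
  assert (Hcv := proj2 (proj2 Hm) D HD).
  assert (Hdis : forall i j x, i <> j -> D i x -> D j x -> False).
  { assert (forall i j x, (i < j)%nat -> D i x -> D j x -> False).
    { intros i j x Hij Hi Hj. destruct j as [|j]; [lia|]. simpl in Hj. destruct Hj as [_ Hj].
      apply Hj. apply Hle with i; [lia|]. destruct i; simpl in Hi; tauto. }
    intros i j x Hij Hi Hj. destruct (Nat.lt_ge_cases i j); [eauto|].
    apply (H j i x); auto; lia. }
  specialize (Hcv Hdis).
  replace (fun x => exists n, D n x) with (fun x => exists n, S n x) in Hcv.
  2:{ apply set_ext; intro x; split.
      - intros [n Hn]. induction n.
        + exists 0%nat; auto.
        + destruct (classic (S n x)); auto. exists (Datatypes.S n); simpl; auto.
      - intros [n Hn]; exists n; destruct n; simpl in Hn; tauto. }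
  set (L := m (fun x => exists n, S n x)) in *.
  apply Rnot_lt_le; intro HL.
  destruct (Hcv (L - c)) as [N HN]; [lra|].
  specialize (HN N (le_n _)). rewrite Hsum in HN. specialize (Hc N).
  unfold R_dist in HN. apply Rabs_def2 in HN. lra.
Qed.

Definition dec (P : Prop) : bool := if excluded_middle_informative P then true else false.

Lemma dec_true (P : Prop) : dec P = true <-> P.
Proof. unfold dec; destruct (excluded_middle_informative P); split; intros; auto; discriminate. Qed.

Lemma dec_false (P : Prop) : dec P = false <-> ~ P.
Proof. unfold dec; destruct (excluded_middle_informative P); split; intros; auto; try discriminate; tauto. Qed.

Fixpoint sgn {T : Type} (As : list (T -> Prop)) (x : T) : list bool :=
  match As with nil => nil | A :: As' => dec (A x) :: sgn As' x end.

Fixpoint binter (s t : list bool) : bool :=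
  match s, t with a :: s', b :: t' => (a && b) || binter s' t' | _, _ => false end.

Lemma binter_comm s t : binter s t = binter t s.
Proof. revert t; induction s as [|a s IH]; intros [|b t]; simpl; auto. rewrite IH, Bool.andb_comm; auto. Qed.

Fixpoint ASum {T : Type} (m : (T -> Prop) -> R) (As : list (T -> Prop)) (f : list bool -> R) (C : T -> Prop) : R :=
  match As with
  | nil => f nil * m C
  | A :: As' => ASum m As' (fun t => f (true :: t)) (fun x => C x /\ A x)
              + ASum m As' (fun t => f (false :: t)) (fun x => C x /\ ~ A x)
  end.

Lemma ASum_add {T : Type} m (As : list (T -> Prop)) f g C :
  ASum m As (fun t => f t + g t) C = ASum m As f C + ASum m As g C.
Proof.
  revert f g C; induction As as [|A As IH]; intros f g C; simpl; [ring|].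
  rewrite (IH (fun t => f (true :: t))), (IH (fun t => f (false :: t))). ring.
Qed.

Lemma ASum_scal {T : Type} m (As : list (T -> Prop)) f c C :
  ASum m As (fun t => f t * c) C = ASum m As f C * c.
Proof.
  revert f C; induction As as [|A As IH]; intros f C; simpl; [ring|].
  rewrite (IH (fun t => f (true :: t))), (IH (fun t => f (false :: t))). ring.
Qed.

Lemma ASum_exch {T U : Type} m1 m2 (As : list (T -> Prop)) (Bs : list (U -> Prop)) h C D :
  ASum m1 As (fun s => ASum m2 Bs (h s) D) C = ASum m2 Bs (fun t => ASum m1 As (fun s => h s t) C) D.
Proof.
  revert h C; induction As as [|A As IH]; intros h C; simpl.
  - rewrite <- ASum_scal. reflexivity.
  - rewrite (IH (fun s => h (true :: s))), (IH (fun s => h (false :: s))).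
    rewrite <- ASum_add. reflexivity.
Qed.

Lemma ASum_mono {T : Type} (d : T -> T -> R) m (As : list (T -> Prop)) f g C :
  borel_prob d m -> borel d C -> Forall (borel d) As -> (forall t, f t <= g t) ->
  ASum m As f C <= ASum m As g C.
Proof.
  intros Hm. revert f g C; induction As as [|A As IH]; intros f g C HC HAs Hfg; simpl.
  - apply Rmult_le_compat_r; auto. apply m_nonneg with d; auto.
  - inversion HAs; subst. apply Rplus_le_compat; apply IH; auto.
    + apply borel_and; auto.
    + apply borel_andnot; auto.
Qed.

Lemma ASum_const {T : Type} (d : T -> T -> R) m (As : list (T -> Prop)) c C :
  borel_prob d m -> borel d C -> Forall (borel d) As ->
  ASum m As (fun _ => c) C = c * m C.
Proof.
  intros Hm. revert C; induction As as [|A As IH]; intros C HC HAs; simpl; auto.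
  inversion HAs; subst. rewrite !IH; auto.
  - rewrite (m_split d m C A Hm HC); auto. ring.
  - apply borel_andnot; auto.
  - apply borel_and; auto.
Qed.

Definition ind01 (b : bool) : R := if b then 1 else 0.

Lemma borel_sgn {T : Type} (d : T -> T -> R) (As : list (T -> Prop)) K C :
  borel d C -> Forall (borel d) As -> borel d (fun x => C x /\ K (sgn As x) = true).
Proof.
  revert K C; induction As as [|A As IH]; intros K C HC HAs; simpl.
  - destruct (K nil). + replace (fun x => C x /\ true = true) with C; auto. apply set_ext; intuition.
    + replace (fun x => C x /\ false = true) with (fun _ : T => False). apply borel_False.
      apply set_ext; intuition; discriminate.
  - inversion HAs; subst.
    replace (fun x => C x /\ K (dec (A x) :: sgn As x) = true) with
      (fun x => (fun y => (fun z => C z /\ A z) y /\ (fun t => K (true :: t)) (sgn As y) = true) x \/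
                (fun y => (fun z => C z /\ ~ A z) y /\ (fun t => K (false :: t)) (sgn As y) = true) x).
    + apply borel_or.
      * exact (IH (fun t => K (true :: t)) (fun z => C z /\ A z) (borel_and d _ _ HC H1) H2).
      * exact (IH (fun t => K (false :: t)) (fun z => C z /\ ~ A z) (borel_andnot d _ _ HC H1) H2).
    + apply set_ext; intro x. destruct (classic (A x)) as [Ha|Ha].
      * rewrite (proj2 (dec_true _) Ha). tauto.
      * rewrite (proj2 (dec_false _) Ha). tauto.
Qed.

Lemma ASum_ind {T : Type} (d : T -> T -> R) m (As : list (T -> Prop)) K C :
  borel_prob d m -> borel d C -> Forall (borel d) As ->
  m (fun x => C x /\ K (sgn As x) = true) = ASum m As (fun t => ind01 (K t)) C.
Proof.
  intros Hm. revert K C; induction As as [|A As IH]; intros K C HC HAs; simpl.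
  - unfold ind01; destruct (K nil).
    + rewrite Rmult_1_l. f_equal. apply set_ext; intuition.
    + rewrite Rmult_0_l. rewrite <- (m_empty d m Hm). f_equal. apply set_ext; intuition; discriminate.
  - inversion HAs; subst.
    rewrite <- (IH (fun t => K (true :: t))), <- (IH (fun t => K (false :: t))); auto.
    2: apply borel_andnot; auto. 2: apply borel_and; auto.
    rewrite (m_split d m _ A Hm).
    + f_equal; f_equal; apply set_ext; intro x; destruct (classic (A x)) as [Ha|Ha].
      * rewrite (proj2 (dec_true _) Ha). tauto.
      * rewrite (proj2 (dec_false _) Ha). tauto.
      * rewrite (proj2 (dec_true _) Ha). tauto.
      * rewrite (proj2 (dec_false _) Ha). tauto.
    + replace (fun x => C x /\ K (dec (A x) :: sgn As x) = true) with
        (fun x => C x /\ (fun t => K (t)) (sgn (A :: As) x) = true) by reflexivity.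
      apply borel_sgn; auto.
    + auto.
Qed.

Definition tri (e a : R) (x y : option bool) : R :=
  match x, y with
  | None, None => 0
  | None, Some _ => a
  | Some _, None => a
  | Some u, Some v => if Bool.eqb u v then 0 else e
  end.

Lemma tri_metric e a : 0 < e -> 0 < a -> e <= 2 * a -> is_metric (tri e a).
Proof.
  intros He Ha Hea. split; [|split].
  - intros [[|]|] [[|]|]; simpl; split; intros H; try congruence; lra.
  - intros [[|]|] [[|]|]; simpl; reflexivity.
  - intros [[|]|] [[|]|] [[|]|]; simpl; lra.
Qed.

Lemma real3 c a : 0 <= c -> c <= 2 * a ->
  exists (d : option bool -> option bool -> R) z1 z2 z3,
    is_metric d /\ d z1 z2 = c /\ d z2 z3 = a /\ d z1 z3 = a.
Proof.
  intros Hc Hca. destruct (Req_dec c 0) as [Hc0|Hc0].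
  - destruct (Req_dec a 0) as [Ha0|Ha0].
    + exists (tri 1 1), (Some true), (Some true), (Some true).
      split; [apply tri_metric; lra|]. simpl. lra.
    + assert (0 < a) by lra.
      exists (tri a a), (Some true), (Some true), None.
      split; [apply tri_metric; lra|]. simpl. lra.
  - exists (tri c a), (Some true), (Some false), None.
    split; [apply tri_metric; lra|]. simpl. lra.
Qed.

Lemma F_nonneg F : F2 F -> forall a b, 0 <= a -> 0 <= b -> 0 <= F a b.
Proof. intros [H _]; auto. Qed.

Lemma F_tri F : F2 F -> forall c1 a1 c2 a2, 0 <= c1 -> c1 <= 2 * a1 -> 0 <= c2 -> c2 <= 2 * a2 ->
  F c1 c2 <= 2 * F a1 a2.
Proof.
  intros HF c1 a1 c2 a2 H1 H2 H3 H4.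
  destruct (real3 c1 a1 H1 H2) as [d [z1 [z2 [z3 [Hd [E1 [E2 E3]]]]]]].
  destruct (real3 c2 a2 H3 H4) as [e [w1 [w2 [w3 [He [G1 [G2 G3]]]]]]].
  pose proof (proj2 (proj2 HF) _ _ d e Hd He) as Hm.
  destruct Hm as [_ [Hs Ht]].
  specialize (Ht (z1, w1) (z3, w3) (z2, w2)). simpl in Ht.
  rewrite (proj1 (proj2 Hd) z3 z2), (proj1 (proj2 He) w3 w2) in Ht.
  rewrite E1, E2, E3, G1, G2, G3 in Ht. lra.
Qed.

Lemma F00 F : F2 F -> F 0 0 = 0.
Proof.
  intros HF. destruct (real3 0 0) as [d [z1 [_ [_ [Hd _]]]]]; try lra.
  pose proof (proj2 (proj2 HF) _ _ d d Hd Hd) as Hm.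
  pose proof (d_refl _ Hm (z1, z1)) as H. simpl in H.
  rewrite (d_refl d Hd z1) in H. exact H.
Qed.

Lemma Fpos1 F : F2 F -> forall a, 0 < a -> 0 < F a 0.
Proof.
  intros HF a Ha. destruct (real3 a a) as [d [z1 [z2 [_ [Hd [E1 _]]]]]]; try lra.
  pose proof (proj2 (proj2 HF) _ _ d d Hd Hd) as Hm.
  pose proof (d_nonneg _ Hm (z1, z1) (z2, z1)) as H0. simpl in H0.
  rewrite E1, (d_refl d Hd z1) in H0.
  destruct H0 as [|H0]; auto. exfalso.
  pose proof (proj1 (proj1 Hm (z1, z1) (z2, z1))) as H. simpl in H.
  rewrite E1, (d_refl d Hd z1) in H. specialize (H (eq_sym H0)). injection H as H.
  rewrite H, (d_refl d Hd) in E1. lra.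
Qed.

Lemma Fpos2 F : F2 F -> forall a, 0 < a -> 0 < F 0 a.
Proof.
  intros HF a Ha. destruct (real3 a a) as [d [z1 [z2 [_ [Hd [E1 _]]]]]]; try lra.
  pose proof (proj2 (proj2 HF) _ _ d d Hd Hd) as Hm.
  pose proof (d_nonneg _ Hm (z1, z1) (z1, z2)) as H0. simpl in H0.
  rewrite E1, (d_refl d Hd z1) in H0.
  destruct H0 as [|H0]; auto. exfalso.
  pose proof (proj1 (proj1 Hm (z1, z1) (z1, z2))) as H. simpl in H.
  rewrite E1, (d_refl d Hd z1) in H. specialize (H (eq_sym H0)). injection H as H.
  rewrite H, (d_refl d Hd) in E1. lra.
Qed.

Lemma dF_metric X Y (dX : X -> X -> R) (dY : Y -> Y -> R) F :
  F2 F -> is_metric dX -> is_metric dY -> is_metric (dprod F dX dY).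
Proof. intros HF HX HY. apply (proj2 (proj2 HF)); auto. Qed.

Lemma cyl1_open X Y (dX : X -> X -> R) (dY : Y -> Y -> R) F U :
  F2 F -> is_metric dX -> is_metric dY -> is_open dX U -> is_open (dprod F dX dY) (fun p => U (fst p)).
Proof.
  intros HF HX HY HU p Hp. destruct (HU _ Hp) as [r0 [Hr0 Hb]].
  pose proof (Fpos1 F HF r0 Hr0).
  exists (F r0 0 / 2). split; [lra|]. intros q Hq. apply Hb.
  apply Rnot_le_lt; intro Hge.
  unfold dprod in Hq.
  pose proof (F_tri F HF r0 (dX (fst p) (fst q)) 0 (dY (snd p) (snd q))) as Ht.
  assert (0 <= dY (snd p) (snd q)) by (apply d_nonneg; auto).
  assert (F r0 0 <= 2 * F (dX (fst p) (fst q)) (dY (snd p) (snd q))) by (apply Ht; lra).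
  lra.
Qed.

Lemma cyl2_open X Y (dX : X -> X -> R) (dY : Y -> Y -> R) F V :
  F2 F -> is_metric dX -> is_metric dY -> is_open dY V -> is_open (dprod F dX dY) (fun p => V (snd p)).
Proof.
  intros HF HX HY HU p Hp. destruct (HU _ Hp) as [r0 [Hr0 Hb]].
  pose proof (Fpos2 F HF r0 Hr0).
  exists (F 0 r0 / 2). split; [lra|]. intros q Hq. apply Hb.
  apply Rnot_le_lt; intro Hge.
  unfold dprod in Hq.
  pose proof (F_tri F HF 0 (dX (fst p) (fst q)) r0 (dY (snd p) (snd q))) as Ht.
  assert (0 <= dX (fst p) (fst q)) by (apply d_nonneg; auto).
  assert (F 0 r0 <= 2 * F (dX (fst p) (fst q)) (dY (snd p) (snd q))) by (apply Ht; lra).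
  lra.
Qed.

Lemma cyl1_borel X Y (dX : X -> X -> R) (dY : Y -> Y -> R) F A :
  F2 F -> is_metric dX -> is_metric dY -> borel dX A -> borel (dprod F dX dY) (fun p => A (fst p)).
Proof.
  intros HF HX HY HA.
  apply (HA (fun B => borel (dprod F dX dY) (fun p => B (fst p)))).
  - split; [|split].
    + apply borel_True.
    + intros B HB. apply (borel_compl _ (fun p => B (fst p))); auto.
    + intros B HB. apply (borel_union _ (fun n p => B n (fst p))); auto.
  - intros O HO. apply borel_open. apply cyl1_open; auto.
Qed.

Lemma cyl2_borel X Y (dX : X -> X -> R) (dY : Y -> Y -> R) F A :
  F2 F -> is_metric dX -> is_metric dY -> borel dY A -> borel (dprod F dX dY) (fun p => A (snd p)).
Proof.
  intros HF HX HY HA.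
  apply (HA (fun B => borel (dprod F dX dY) (fun p => B (snd p)))).
  - split; [|split].
    + apply borel_True.
    + intros B HB. apply (borel_compl _ (fun p => B (snd p))); auto.
    + intros B HB. apply (borel_union _ (fun n p => B n (snd p))); auto.
  - intros O HO. apply borel_open. apply cyl2_open; auto.
Qed.

Definition Hs {T : Type} (Bs : list (T -> Prop)) (s : list bool) : T -> Prop :=
  fun y => binter s (sgn Bs y) = true.

Lemma nbhd_Hs {T : Type} (d : T -> T -> R) r (Bs : list (T -> Prop)) s :
  nbhd d r (Hs Bs s) = Hs (map (nbhd d r) Bs) s.
Proof.
  apply set_ext. unfold Hs, nbhd. revert s; induction Bs as [|B Bs IH]; intros s y; simpl.
  - destruct s; simpl; split; [intros [_ [H _]]; discriminate | discriminate | intros [_ [H _]]; discriminate| discriminate].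
  - destruct s as [|c s]; simpl.
    + split; [intros [_ [H _]]; discriminate | discriminate].
    + rewrite Bool.orb_true_iff, Bool.andb_true_iff, dec_true. rewrite <- IH.
      split.
      * intros [y0 [H Hd]]. rewrite Bool.orb_true_iff, Bool.andb_true_iff, dec_true in H.
        destruct H as [[Hc HB]|H]; [left; split; auto; exists y0; auto | right; exists y0; auto].
      * intros [[Hc [y0 [HB Hd]]]|[y0 [H Hd]]]; exists y0; split; auto;
          rewrite Bool.orb_true_iff, Bool.andb_true_iff, dec_true; auto.
Qed.

Lemma Fub {T U : Type} (d1 : T -> T -> R) (d2 : U -> U -> R) m1 m2 (As : list (T -> Prop)) (Bs : list (U -> Prop)) :
  borel_prob d1 m1 -> borel_prob d2 m2 -> Forall (borel d1) As -> Forall (borel d2) Bs ->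
  ASum m1 As (fun s => m2 (Hs Bs s)) (fun _ => True) = ASum m2 Bs (fun t => m1 (Hs As t)) (fun _ => True).
Proof.
  intros Hm1 Hm2 HA HB.
  replace (fun s => m2 (Hs Bs s)) with (fun s => ASum m2 Bs (fun t => ind01 (binter s t)) (fun _ => True)).
  2:{ apply functional_extensionality; intro s. rewrite <- (ASum_ind d2); auto; [|apply borel_True].
      f_equal. apply set_ext; intro y. unfold Hs. tauto. }
  rewrite ASum_exch. f_equal. apply functional_extensionality; intro t.
  rewrite <- (ASum_ind d1 m1 As (fun s => binter s t)); auto; [|apply borel_True].
  f_equal. apply set_ext; intro x. unfold Hs. rewrite binter_comm. tauto.
Qed.

Lemma borel_Hs {T : Type} (d : T -> T -> R) (Bs : list (T -> Prop)) s :
  Forall (borel d) Bs -> borel d (Hs Bs s).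
Proof.
  intros HB. replace (Hs Bs s) with (fun y => (fun _ => True) y /\ binter s (sgn Bs y) = true).
  - apply borel_sgn; auto. apply borel_True.
  - apply set_ext; intro; unfold Hs; tauto.
Qed.

Lemma borel_prodsig X Y (dX : X -> X -> R) (dY : Y -> Y -> R) F (As : list (X -> Prop)) (H : list bool -> Y -> Prop) C :
  F2 F -> is_metric dX -> is_metric dY -> borel dX C -> Forall (borel dX) As -> (forall s, borel dY (H s)) ->
  borel (dprod F dX dY) (fun p => C (fst p) /\ H (sgn As (fst p)) (snd p)).
Proof.
  intros HF HX HY. revert H C; induction As as [|A As IH]; intros H C HC HAs HH; simpl.
  - apply (borel_and _ (fun p => C (fst p)) (fun p => H nil (snd p))).
    + apply cyl1_borel; auto.
    + apply cyl2_borel; auto.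
  - inversion HAs; subst.
    replace (fun p : X * Y => C (fst p) /\ H (dec (A (fst p)) :: sgn As (fst p)) (snd p)) with
      (fun p => (fun q : X * Y => (fun z => C z /\ A z) (fst q) /\ (fun t => H (true :: t)) (sgn As (fst q)) (snd q)) p \/
                (fun q : X * Y => (fun z => C z /\ ~ A z) (fst q) /\ (fun t => H (false :: t)) (sgn As (fst q)) (snd q)) p).
    + apply borel_or.
      * exact (IH (fun t => H (true :: t)) (fun z => C z /\ A z) (borel_and _ _ _ HC H2) H3 (fun s => HH _)).
      * exact (IH (fun t => H (false :: t)) (fun z => C z /\ ~ A z) (borel_andnot _ _ _ HC H2) H3 (fun s => HH _)).
    + apply set_ext; intro p. destruct (classic (A (fst p))) as [Ha|Ha].
      * rewrite (proj2 (dec_true _) Ha). tauto.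
      * rewrite (proj2 (dec_false _) Ha). tauto.
Qed.

Lemma prod_ASum X Y (dX : X -> X -> R) (dY : Y -> Y -> R) F m1 m2 P (As : list (X -> Prop)) (H : list bool -> Y -> Prop) C :
  F2 F -> is_metric dX -> is_metric dY -> borel_prob dX m1 ->
  is_product_measure dX dY (dprod F dX dY) m1 m2 P ->
  borel dX C -> Forall (borel dX) As -> (forall s, borel dY (H s)) ->
  P (fun p => C (fst p) /\ H (sgn As (fst p)) (snd p)) = ASum m1 As (fun s => m2 (H s)) C.
Proof.
  intros HF HX HY Hm1 HP. revert H C; induction As as [|A As IH]; intros H C HC HAs HH; simpl.
  - rewrite (proj2 HP); auto. ring.
  - inversion HAs; subst.
    rewrite <- (IH (fun t => H (true :: t))), <- (IH (fun t => H (false :: t))); auto.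
    2: apply borel_andnot; auto. 2: apply borel_and; auto.
    rewrite (m_split (dprod F dX dY) P _ (fun p => A (fst p)) (proj1 HP)).
    + f_equal; f_equal; apply set_ext; intro p; destruct (classic (A (fst p))) as [Ha|Ha].
      * rewrite (proj2 (dec_true _) Ha). tauto.
      * rewrite (proj2 (dec_false _) Ha). tauto.
      * rewrite (proj2 (dec_true _) Ha). tauto.
      * rewrite (proj2 (dec_false _) Ha). tauto.
    + exact (borel_prodsig X Y dX dY F (A :: As) H C HF HX HY HC HAs HH).
    + apply cyl1_borel; auto.
Qed.

Definition Eset {X Y : Type} (As : list (X -> Prop)) (Bs : list (Y -> Prop)) : X * Y -> Prop :=
  fun p => binter (sgn As (fst p)) (sgn Bs (snd p)) = true.

Lemma Eset_eq {X Y : Type} (As : list (X -> Prop)) (Bs : list (Y -> Prop)) :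
  Eset As Bs = fun p => (fun _ => True) (fst p) /\ Hs Bs (sgn As (fst p)) (snd p).
Proof. apply set_ext; intro p; unfold Eset, Hs; tauto. Qed.

Lemma Eset_l {X Y : Type} (l : list ((X -> Prop) * (Y -> Prop))) p :
  Eset (map fst l) (map snd l) p <-> exists AB, In AB l /\ fst AB (fst p) /\ snd AB (snd p).
Proof.
  unfold Eset. induction l as [|[A B] l IH]; simpl.
  - split; [discriminate| intros [_ [[] _]]].
  - rewrite Bool.orb_true_iff, Bool.andb_true_iff, !dec_true, IH. split.
    + intros [[Ha Hb]|[AB [H1 H2]]]; [exists (A, B); simpl; auto| exists AB; auto].
    + intros [AB [[H1|H1] H2]]; [subst; left; auto| right; exists AB; auto].
Qed.

Lemma borel_Eset X Y (dX : X -> X -> R) (dY : Y -> Y -> R) F (As : list (X -> Prop)) (Bs : list (Y -> Prop)) :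
  F2 F -> is_metric dX -> is_metric dY -> Forall (borel dX) As -> Forall (borel dY) Bs ->
  borel (dprod F dX dY) (Eset As Bs).
Proof.
  intros. rewrite Eset_eq. apply (borel_prodsig X Y dX dY F As (Hs Bs) (fun _ => True)); auto. apply borel_True.
  intros; apply borel_Hs; auto.
Qed.

Lemma Forall_nbhd {T : Type} (d : T -> T -> R) r (As : list (T -> Prop)) :
  is_metric d -> Forall (borel d) (map (nbhd d r) As).
Proof. intros Hd. apply Forall_forall; intros A HA. apply in_map_iff in HA as [B [<- _]]. apply nbhd_borel; auto. Qed.

Lemma finite_step X Y (dX : X -> X -> R) (dY : Y -> Y -> R) F mu mu' nu nu' P P' lam a b
  (As : list (X -> Prop)) (Bs : list (Y -> Prop)) :
  F2 F -> is_metric dX -> is_metric dY ->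
  borel_prob dX mu -> borel_prob dX mu' -> borel_prob dY nu -> borel_prob dY nu' ->
  is_product_measure dX dY (dprod F dX dY) mu nu P ->
  is_product_measure dX dY (dprod F dX dY) mu' nu' P' ->
  Forall (borel dX) As -> Forall (borel dY) Bs ->
  prok_adm dX lam mu mu' a -> prok_adm dY lam nu nu' b ->
  P' (Eset As Bs) <= P (Eset (map (nbhd dX a) As) (map (nbhd dY b) Bs)) + lam * a + lam * b.
Proof.
  intros HF HX HY Hmu Hmu' Hnu Hnu' HP HP' HA HB [Ha Hadm] [Hb Hbdm].
  set (Ws := map (nbhd dX a) As). set (Vs := map (nbhd dY b) Bs).
  assert (HW : Forall (borel dX) Ws) by (apply Forall_nbhd; auto).
  assert (HV : Forall (borel dY) Vs) by (apply Forall_nbhd; auto).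
  rewrite (Eset_eq As Bs). rewrite (prod_ASum X Y dX dY F mu' nu' P' As (Hs Bs) (fun _ => True)); auto; [|apply borel_True|intros; apply borel_Hs; auto].
  rewrite (Eset_eq Ws Vs). rewrite (prod_ASum X Y dX dY F mu nu P Ws (Hs Vs) (fun _ => True)); auto; [|apply borel_True|intros; apply borel_Hs; auto].
  apply Rle_trans with (ASum mu' As (fun s => nu (Hs Vs s) + lam * b) (fun _ => True)).
  { apply (ASum_mono dX); auto. apply borel_True. intro s.
    pose proof (Hbdm (Hs Bs s) (borel_Hs _ _ _ HB)) as H. unfold Vs. rewrite <- nbhd_Hs. lra. }
  rewrite ASum_add, (ASum_const dX mu' As (lam * b)); auto; [|apply borel_True].
  rewrite (proj1 Hmu').
  rewrite (Fub dX dY mu' nu); auto.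
  rewrite (Fub dX dY mu nu); auto.
  assert (ASum nu Vs (fun t => mu' (Hs As t)) (fun _ => True) <=
          ASum nu Vs (fun t => mu (Hs Ws t) + lam * a) (fun _ => True)).
  { apply (ASum_mono dY); auto. apply borel_True. intro t.
    pose proof (Hadm (Hs As t) (borel_Hs _ _ _ HA)) as H. unfold Ws. rewrite <- nbhd_Hs. lra. }
  rewrite ASum_add, (ASum_const dY nu Vs (lam * a)) in H; auto; [|apply borel_True].
  rewrite (proj1 Hnu) in H. lra.
Qed.

Lemma Eset_map {X Y : Type} (l : list ((X -> Prop) * (Y -> Prop))) (f1 : (X -> Prop) -> X -> Prop) (f2 : (Y -> Prop) -> Y -> Prop) p :
  Eset (map f1 (map fst l)) (map f2 (map snd l)) p <-> exists AB, In AB l /\ f1 (fst AB) (fst p) /\ f2 (snd AB) (snd p).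
Proof.
  set (g := fun AB : (X -> Prop) * (Y -> Prop) => (f1 (fst AB), f2 (snd AB))).
  replace (map f1 (map fst l)) with (map fst (map g l)) by (rewrite !map_map; reflexivity).
  replace (map f2 (map snd l)) with (map snd (map g l)) by (rewrite !map_map; reflexivity).
  rewrite Eset_l. split.
  - intros [AB [H1 H2]]. apply in_map_iff in H1 as [AB' [<- H1]]. exists AB'; auto.
  - intros [AB [H1 H2]]. exists (g AB); split; auto. apply in_map; auto.
Qed.

Lemma open_claim X Y (dX : X -> X -> R) (dY : Y -> Y -> R) F mu mu' nu nu' P P' lam a b r O :
  F2 F -> is_metric dX -> is_metric dY -> separable dX -> separable dY ->
  borel_prob dX mu -> borel_prob dX mu' -> borel_prob dY nu -> borel_prob dY nu' ->
  is_product_measure dX dY (dprod F dX dY) mu nu P ->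
  is_product_measure dX dY (dprod F dX dY) mu' nu' P' ->
  prok_adm dX lam mu mu' a -> prok_adm dY lam nu nu' b ->
  2 * F a b < r -> is_open (dprod F dX dY) O ->
  P' O <= P (nbhd (dprod F dX dY) r O) + lam * a + lam * b.
Proof.
  intros HF HX HY [DX [[gX HgX] HdX]] [DY [[gY HgY] HdY]] Hmu Hmu' Hnu Hnu' HP HP' Ha Hb Hr HO.
  assert (HdF := dF_metric X Y dX dY F HF HX HY).
  set (rho := fun k : nat => / INR (S k)).
  assert (Hrho : forall k, 0 < rho k).
  { intro k; unfold rho; apply Rinv_0_lt_compat, lt_0_INR; lia. }
  set (RX := fun (i k : nat) => nbhd dX (rho k) (fun z => DX z /\ gX z = i)).
  set (RY := fun (j k : nat) => nbhd dY (rho k) (fun z => DY z /\ gY z = j)).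
  set (rect := fun i j k : nat =>
    if excluded_middle_informative (forall x y, RX i k x -> RY j k y -> O (x, y))
    then (RX i k, RY j k) else ((fun _ : X => False), (fun _ : Y => False))).
  set (sq := fun N => seq 0 (S N)).
  set (lN := fun N => flat_map (fun i => flat_map (fun j => map (fun k => rect i j k) (sq N)) (sq N)) (sq N)).
  assert (HinN : forall N AB, In AB (lN N) <-> exists i j k, (i <= N /\ j <= N /\ k <= N)%nat /\ rect i j k = AB).
  { intros N AB. unfold lN, sq. rewrite in_flat_map. split.
    - intros [i [Hi H]]. rewrite in_flat_map in H. destruct H as [j [Hj H]].
      apply in_map_iff in H as [k [Hk Hk']]. apply in_seq in Hi, Hj, Hk'.
      exists i, j, k; split; [lia|auto].
    - intros [i [j [k [Hijk Heq]]]]. exists i; split; [apply in_seq; lia|].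
      rewrite in_flat_map. exists j; split; [apply in_seq; lia|].
      apply in_map_iff. exists k; split; auto. apply in_seq; lia. }
  set (ON := fun N => Eset (map fst (lN N)) (map snd (lN N))).
  assert (HONi : forall N p, ON N p <-> exists i j k, (i <= N /\ j <= N /\ k <= N)%nat /\
                    fst (rect i j k) (fst p) /\ snd (rect i j k) (snd p)).
  { intros N p. unfold ON. rewrite Eset_l. split.
    - intros [AB [H1 H2]]. apply HinN in H1 as [i [j [k [H3 <-]]]]. exists i, j, k; auto.
    - intros [i [j [k [H3 H4]]]]. exists (rect i j k); split; auto. apply HinN. exists i, j, k; auto. }
  assert (HrectO : forall i j k p, fst (rect i j k) (fst p) -> snd (rect i j k) (snd p) -> O p).
  { intros i j k p. unfold rect. destruct excluded_middle_informative as [H|H]; simpl; [|tauto].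
    intros. destruct p; apply H; auto. }
  assert (HONO : forall N p, ON N p -> O p).
  { intros N p Hp. apply HONi in Hp as [i [j [k [_ [H1 H2]]]]]. eauto. }
  assert (HBX : forall N, Forall (borel dX) (map fst (lN N))).
  { intro N. apply Forall_forall. intros A HA. apply in_map_iff in HA as [AB [<- HA]].
    apply HinN in HA as [i [j [k [_ <-]]]]. unfold rect. destruct excluded_middle_informative; simpl.
    - apply nbhd_borel; auto.
    - apply borel_False. }
  assert (HBY : forall N, Forall (borel dY) (map snd (lN N))).
  { intro N. apply Forall_forall. intros A HA. apply in_map_iff in HA as [AB [<- HA]].
    apply HinN in HA as [i [j [k [_ <-]]]]. unfold rect. destruct excluded_middle_informative; simpl.
    - apply nbhd_borel; auto.
    - apply borel_False. }
  assert (HON_borel : forall N, borel (dprod F dX dY) (ON N)).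
  { intro N. apply borel_Eset; auto. }
  assert (HOcov : forall p, O p -> exists N, ON N p).
  { intros p Hp. destruct (HO p Hp) as [r0 [Hr0 Hball]].
    destruct (proj1 (proj2 HF) 0 0 (Rle_refl 0) (Rle_refl 0) r0 Hr0) as [del [Hdel Hcont]].
    rewrite (F00 F HF) in Hcont.
    destruct (archimed_cor1 (del / 2)) as [K [HK HK0]]; [lra|].
    set (k := pred K). assert (Hk : rho k < del / 2) by (unfold rho, k; rewrite Nat.succ_pred_pos; auto).
    destruct (HdX (fst p) (rho k) (Hrho k)) as [z [Hz Hpz]].
    destruct (HdY (snd p) (rho k) (Hrho k)) as [w [Hw Hpw]].
    set (i := gX z). set (j := gY w).
    assert (Hcond : forall x y, RX i k x -> RY j k y -> O (x, y)).
    { intros x y [z' [[Hz' Hgz'] Hxz']] [w' [[Hw' Hgw'] Hyw']].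
      assert (z' = z) by (apply HgX; auto). assert (w' = w) by (apply HgY; auto). subst z' w'.
      apply Hball. unfold dprod; simpl.
      assert (dX (fst p) x < del).
      { pose proof (proj2 (proj2 HX) (fst p) z x). rewrite (proj1 (proj2 HX) z x) in H. lra. }
      assert (dY (snd p) y < del).
      { pose proof (proj2 (proj2 HY) (snd p) w y). rewrite (proj1 (proj2 HY) w y) in H0. lra. }
      pose proof (d_nonneg dX HX (fst p) x). pose proof (d_nonneg dY HY (snd p) y).
      assert (Hc := Hcont (dX (fst p) x) (dY (snd p) y) H1 H2).
      rewrite !Rminus_0_r, !Rabs_right in Hc by lra.
      specialize (Hc H H0). apply Rabs_def2 in Hc. lra. }
    exists (Nat.max i (Nat.max j k)). apply HONi. exists i, j, k. split; [lia|].
    unfold rect. destruct excluded_middle_informative as [_|Hn]; [|tauto]. simpl. split.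
    - exists z; auto.
    - exists w; auto. }
  assert (HOeq : O = fun p => exists N, ON N p).
  { apply set_ext; intro p; split; auto. intros [N HN]; eauto. }
  assert (HnbB : borel (dprod F dX dY) (nbhd (dprod F dX dY) r O)) by (apply nbhd_borel; auto).
  rewrite HOeq at 1.
  apply (m_cont_below (dprod F dX dY) P' ON); auto.
  - apply (proj1 HP').
  - intros N p Hp. apply HONi in Hp as [i [j [k [H1 H2]]]]. apply HONi. exists i, j, k. split; [lia|auto].
  - intro N. eapply Rle_trans.
    + apply (finite_step X Y dX dY F mu mu' nu nu' P P' lam a b); eauto.
    + apply Rplus_le_compat_r, Rplus_le_compat_r. apply (m_mono (dprod F dX dY) P); auto.
      * apply (proj1 HP).
      * apply borel_Eset; auto; apply Forall_nbhd; auto.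
      * intros p Hp. apply Eset_map in Hp as [AB [HAB [[x0 [Hx0 Hdx]] [y0 [Hy0 Hdy]]]]].
        exists (x0, y0). split.
        -- apply HONO with N. unfold ON. apply Eset_l. exists AB; auto.
        -- unfold dprod; simpl. destruct Ha as [Ha _]; destruct Hb as [Hb _].
           pose proof (d_nonneg dX HX (fst p) x0). pose proof (d_nonneg dY HY (snd p) y0).
           assert (F (dX (fst p) x0) (dY (snd p) y0) <= 2 * F a b) by (apply F_tri; auto; lra).
           lra.
Qed.

Lemma key X Y (dX : X -> X -> R) (dY : Y -> Y -> R) F mu mu' nu nu' P P' lam a b rho :
  F2 F -> is_metric dX -> is_metric dY -> separable dX -> separable dY ->
  borel_prob dX mu -> borel_prob dX mu' -> borel_prob dY nu -> borel_prob dY nu' ->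
  is_product_measure dX dY (dprod F dX dY) mu nu P ->
  is_product_measure dX dY (dprod F dX dY) mu' nu' P' -> 0 < lam ->
  prok_adm dX lam mu mu' a -> prok_adm dY lam nu nu' b ->
  Rmax (a + b) (2 * F a b) < rho -> prok_adm (dprod F dX dY) lam P P' rho.
Proof.
  intros HF HX HY sX sY Hmu Hmu' Hnu Hnu' HP HP' Hlam Ha Hb Hrho.
  assert (HdF := dF_metric X Y dX dY F HF HX HY).
  pose proof (Rmax_l (a + b) (2 * F a b)). pose proof (Rmax_r (a + b) (2 * F a b)).
  set (M := Rmax (a + b) (2 * F a b)) in *.
  pose proof (proj1 Ha). pose proof (proj1 Hb).
  split; [lra|]. intros C HC.
  set (del := (rho - M) / 2). set (r := M + del).
  set (O := nbhd (dprod F dX dY) del C).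
  assert (HOo : is_open (dprod F dX dY) O) by (apply nbhd_open; auto).
  assert (K1 := open_claim X Y dX dY F mu mu' nu nu' P P' lam a b r O HF HX HY sX sY Hmu Hmu' Hnu Hnu' HP HP' Ha Hb).
  assert (K2 : 2 * F a b < r) by (unfold r, del; lra).
  specialize (K1 K2 HOo).
  assert (K3 : P' C <= P' O).
  { apply (m_mono (dprod F dX dY)); auto. apply (proj1 HP'). apply borel_open; auto.
    intros p Hp. exists p; split; auto. rewrite (d_refl _ HdF). unfold del; lra. }
  assert (K4 : P (nbhd (dprod F dX dY) r O) <= P (nbhd (dprod F dX dY) rho C)).
  { apply (m_mono (dprod F dX dY)); auto. apply (proj1 HP). apply nbhd_borel; auto. apply nbhd_borel; auto.
    intros q [o [[c [Hc Hoc]] Hqo]]. exists c; split; auto.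
    pose proof (proj2 (proj2 HdF) q o c). unfold r, del in *. lra. }
  assert (K5 : lam * a + lam * b <= lam * rho).
  { rewrite <- Rmult_plus_distr_l. apply Rmult_le_compat_l; lra. }
  lra.
Qed.

Lemma prok_spec {T : Type} (d : T -> T -> R) lam m m' :
  is_metric d -> 0 < lam -> borel_prob d m -> borel_prob d m' ->
  is_inf (prok_adm d lam m m') (prokhorov d lam m m').
Proof.
  intros Hd Hlam Hm Hm'. unfold prokhorov. apply epsilon_spec.
  set (E := fun x => prok_adm d lam m m' (- x)).
  assert (Hb : bound E). { exists 0. intros x [Hx _]. lra. }
  assert (Hne : exists x, E x).
  { exists (- / lam). unfold E. rewrite Ropp_involutive. split.
    - apply Rinv_0_lt_compat; auto.
    - intros A HA. rewrite Rinv_r by lra.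
      pose proof (m_nonneg d m (nbhd d (/ lam) A) Hm (nbhd_borel d _ _ Hd)).
      pose proof (m_le1 d m' A Hm' HA). lra. }
  destruct (completeness E Hb Hne) as [l [Hl1 Hl2]].
  exists (- l). split.
  - intros x Hx. assert (E (- x)) by (unfold E; rewrite Ropp_involutive; auto).
    specialize (Hl1 _ H). lra.
  - intros b Hbd. assert (l <= - b).
    { apply Hl2. intros y Hy. specialize (Hbd _ Hy). lra. }
    lra.
Qed.

Lemma inf_approx S m eta : is_inf S m -> 0 < eta -> exists a, S a /\ m <= a /\ a < m + eta.
Proof.
  intros [H1 H2] Heta. apply NNPP; intro Hn.
  assert (forall x, S x -> m + eta <= x).
  { intros x Hx. apply Rnot_lt_le; intro Hlt. apply Hn. exists x; split; auto. }
  specialize (H2 _ H). lra.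
Qed.

Theorem mainTheorem15
  (X : Type) (dX : X -> X -> R) (Y : Type) (dY : Y -> Y -> R)
  (hX : is_metric dX) (sX : separable dX)
  (hY : is_metric dY) (sY : separable dY)
  (mu mu' : (X -> Prop) -> R) (nu nu' : (Y -> Prop) -> R)
  (hmu : borel_prob dX mu) (hmu' : borel_prob dX mu')
  (hnu : borel_prob dY nu) (hnu' : borel_prob dY nu')
  (F : R -> R -> R) (hF : F2 F)
  (P P' : (X * Y -> Prop) -> R)
  (hP : is_product_measure dX dY (dprod F dX dY) mu nu P)
  (hP' : is_product_measure dX dY (dprod F dX dY) mu' nu' P')
  (lam : R) (hlam : 0 < lam) :
  prokhorov (dprod F dX dY) lam P P' <=
  Rmax (prokhorov dX lam mu mu' + prokhorov dY lam nu nu')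
       (2 * F (prokhorov dX lam mu mu') (prokhorov dY lam nu nu')).
Proof.
  assert (HdF := dF_metric X Y dX dY F hF hX hY).
  pose proof (prok_spec dX lam mu mu' hX hlam hmu hmu') as S1.
  pose proof (prok_spec dY lam nu nu' hY hlam hnu hnu') as S2.
  pose proof (prok_spec (dprod F dX dY) lam P P' HdF hlam (proj1 hP) (proj1 hP')) as S.
  set (p1 := prokhorov dX lam mu mu') in *.
  set (p2 := prokhorov dY lam nu nu') in *.
  set (p := prokhorov (dprod F dX dY) lam P P') in *.
  assert (Hp1 : 0 <= p1) by (apply (proj2 S1); intros x [Hx _]; lra).
  assert (Hp2 : 0 <= p2) by (apply (proj2 S2); intros x [Hx _]; lra).
  pose proof (Rmax_l (p1 + p2) (2 * F p1 p2)). pose proof (Rmax_r (p1 + p2) (2 * F p1 p2)).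
  set (M0 := Rmax (p1 + p2) (2 * F p1 p2)) in *.
  apply Rnot_lt_le; intro Hlt.
  set (g := p - M0).
  destruct (proj1 (proj2 hF) p1 p2 Hp1 Hp2 (g / 4)) as [del [Hdel Hc]]; [unfold g; lra|].
  pose proof (Rmin_l del (g / 4)). pose proof (Rmin_r del (g / 4)).
  assert (Heta : 0 < Rmin del (g / 4)) by (apply Rmin_pos; unfold g; lra).
  set (eta := Rmin del (g / 4)) in *.
  destruct (inf_approx _ _ eta S1 Heta) as [a [Ha [Ha1 Ha2]]].
  destruct (inf_approx _ _ eta S2 Heta) as [b [Hb [Hb1 Hb2]]].
  assert (Hab : Rabs (F a b - F p1 p2) < g / 4).
  { apply Hc; try (destruct Ha; lra); try (destruct Hb; lra);
      apply Rabs_def1; lra. }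
  apply Rabs_def2 in Hab.
  assert (Hk : prok_adm (dprod F dX dY) lam P P' (p - g / 4)).
  { apply (key X Y dX dY F mu mu' nu nu' P P' lam a b); auto.
    apply Rmax_lub_lt; unfold g in *; lra. }
  pose proof (proj1 S _ Hk). unfold g in *. lra.
Qed.
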